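(* Let $\gamma>0$, $\alpha\in\mathbb{R}$ and $p\ge\max\{1,1-\alpha\}$. There is a constant $C>0$ depending only on $p,\gamma,\alpha$ such that for every characteristic function $f$ of a measurable subset of $(0,\infty)$ of finite Lebesgue measure, $$\int_0^\infty f(t)\sinh^\gamma t\,dt\le C\Big(\int_0^\infty f(t)\cosh^\alpha t\,\sinh^{p\gamma-\alpha}t\,dt\Big)^{1/p}.$$ *)

(* Defs.v *)
From HB Require Import structures.
From mathcomp Require Import all_boot all_order all_algebra.
From mathcomp Require Import all_classical all_reals all_analysis.
Set Implicit Arguments. Unset Strict Implicit. Unset Printing Implicit Defensive.
Import Order.TTheory GRing.Theory Num.Theory.
Local Open Scope ring_scope.

Definition sinh {R : realType} (t : R) : R := (expR t - expR (- t)) / 2.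
Definition cosh {R : realType} (t : R) : R := (expR t + expR (- t)) / 2.

(* Main.v *)
Require Import Defs.
From HB Require Import structures.
From mathcomp Require Import all_boot all_order all_algebra.
From mathcomp Require Import all_classical all_reals all_analysis.
From mathcomp Require Import lra measurable_realfun.
Import Order.TTheory GRing.Theory Num.Theory.
Local Open Scope classical_set_scope.
Local Open Scope ring_scope.

Section S.
Variable R : realType.
Implicit Types (s t a x r : R).

Lemma sinh_gt0 t : 0 < t -> 0 < sinh t.
Proof.
move=> t0; rewrite /sinh divr_gt0// subr_gt0 ltr_expR; lra.
Qed.

Lemma cosh_gt0 t : 0 < cosh t.
Proof. by rewrite /cosh divr_gt0// addr_gt0// expR_gt0. Qed.

Lemma sinh_le s t : s <= t -> sinh s <= sinh t.
Proof.
move=> st; rewrite /sinh ler_pM2r// lerB// ?ler_expR//; lra.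
Qed.

Lemma sinh_le_cosh t : sinh t <= cosh t.
Proof.
rewrite /sinh /cosh ler_pM2r// lerD2l; have := expR_gt0 (- t); lra.
Qed.

Lemma sinh_le_expR t : sinh t <= expR t.
Proof.
rewrite /sinh; have := expR_gt0 (- t); have := expR_gt0 t; lra.
Qed.

Lemma tanh_le s t : s <= t -> sinh s * cosh t <= sinh t * cosh s.
Proof.
move=> st; rewrite /sinh /cosh.
have e1 : expR s * expR (- t) <= expR t * expR (- s).
  by rewrite -!expRD ler_expR; lra.
nra.
Qed.

Lemma expR_facts a : 0 <= a ->
  [/\ 1 + a <= expR a, 1 - a <= expR (- a), expR (- a) <= 1 &
      expR a * expR (- a) = 1].
Proof.
move=> a0; split.
- exact: expR_ge1Dx.
- exact: expR_ge1Dx.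
- by rewrite -expR0 ler_expR; lra.
- by rewrite -expRD subrr expR0.
Qed.

Lemma sinh_small a : 0 <= a <= 2^-1 ->
  [/\ sinh a <= 2 * a, a / 2 <= sinh a & cosh a <= 2].
Proof.
move=> /andP[a0 a1]; have [h1 h2 h3 h4] := @expR_facts a a0.
have E0 := expR_gt0 a; have u0 := expR_gt0 (- a).
rewrite /sinh /cosh; split.
- nra.
- nra.
- nra.
Qed.

Lemma sinh_large a : 1 <= a ->
  expR a / 4 <= sinh a /\ cosh a <= 2 * sinh a.
Proof.
move=> a1; have [h1 h2 h3 h4] := @expR_facts a (le_trans ler01 a1).
have E0 := expR_gt0 a; have u0 := expR_gt0 (- a).
rewrite /sinh /cosh; split; nra.
Qed.


Lemma ln_le x y : 0 < x -> x <= y -> ln x <= ln y.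
Proof.
move=> x0 xy; rewrite ler_ln// posrE//; exact: (lt_le_trans x0 xy).
Qed.

Lemma pointwise (gamma alpha p w a t : R) : 0 < gamma -> 1 <= p ->
  0 < a -> a <= t ->
  w <= (p - 1) * gamma * ln (sinh a) +
       Num.max 0 (- alpha) * (ln (sinh a) - ln (cosh a)) ->
  expR w * sinh t `^ gamma <= cosh t `^ alpha * sinh t `^ (p * gamma - alpha).
Proof.
move=> g0 p1 a0 at_ hw.
have t0 : 0 < t by exact: lt_le_trans a0 at_.
have st := @sinh_gt0 t t0; have ct := @cosh_gt0 t.
have sa := @sinh_gt0 a a0; have ca := @cosh_gt0 a.
rewrite /powR !gt_eqF// -!expRD ler_expR.
have h1 : ln (sinh a) <= ln (sinh t) by apply: ln_le => //; exact: sinh_le.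
have h2 : ln (sinh a) + ln (cosh t) <= ln (sinh t) + ln (cosh a).
  rewrite -!lnM ?posrE//; apply: ln_le; first exact: mulr_gt0.
  exact: tanh_le.
have h3 : ln (sinh t) <= ln (cosh t) by apply: ln_le => //; exact: sinh_le_cosh.
have n0 : 0 <= Num.max 0 (- alpha) by rewrite le_max lexx.
have n1 : - alpha <= Num.max 0 (- alpha) by rewrite le_max lexx orbT.
set nu := Num.max 0 (- alpha) in hw n0 n1 *.
set Ls := ln (sinh t) in h1 h2 h3 *; set Lc := ln (cosh t) in h2 h3 *.
set La := ln (sinh a) in hw h1 h2 *; set Lca := ln (cosh a) in hw h2 *.
have q0 : 0 <= (p - 1) * gamma by apply: mulr_ge0; lra.
nra.
Qed.


Lemma msinh : measurable_fun setT (@sinh R).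
Proof.
rewrite /sinh; apply: measurable_funM => //; apply: measurable_funB => //.
exact: measurableT_comp.
Qed.

Lemma mcosh : measurable_fun setT (@cosh R).
Proof.
rewrite /cosh; apply: measurable_funM => //; apply: measurable_funD => //.
exact: measurableT_comp.
Qed.

Lemma mg (D B : set R) r : measurable D -> measurable B ->
  measurable_fun D (fun t => ((\1_B t : R) * sinh t `^ r)%:E).
Proof.
move=> mD mB; apply/measurable_EFinP; apply: measurable_funTS.
apply: (@measurable_funM _ _ _ _ (\1_B) (fun t => sinh t `^ r)) => //.
exact: (measurableT_comp (measurable_powR _) msinh).
Qed.

Lemma mh (D B : set R) r r' : measurable D -> measurable B ->
  measurable_fun D (fun t => ((\1_B t : R) * cosh t `^ r * sinh t `^ r')%:E).
Proof.
move=> mD mB; apply/measurable_EFinP; apply: measurable_funTS.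
apply: (@measurable_funM _ _ _ _ (fun t => (\1_B t : R) * cosh t `^ r) (fun t => sinh t `^ r')).
  apply: (@measurable_funM _ _ _ _ (\1_B) (fun t => cosh t `^ r)) => //.
  exact: (measurableT_comp (measurable_powR _) mcosh).
exact: (measurableT_comp (measurable_powR _) msinh).
Qed.

Lemma key (gamma alpha p w a : R) (A : set R) :
  measurable A -> 0 < a ->
  (forall t, a <= t -> expR w * sinh t `^ gamma <=
      cosh t `^ alpha * sinh t `^ (p * gamma - alpha)) ->
  (\int[lebesgue_measure]_(t in `]0%R, +oo[) ((\1_A t : R) * sinh t `^ gamma)%:E
   <= \int[lebesgue_measure]_(t in `]0%R, +oo[)
          ((\1_`]0%R, a[ t : R) * sinh t `^ gamma)%:E
      + (expR (- w))%:E * \int[lebesgue_measure]_(t in `]0%R, +oo[)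
          ((\1_A t : R) * cosh t `^ alpha * sinh t `^ (p * gamma - alpha))%:E)%E.
Proof.
move=> mA a0 hw.
have mI : measurable (`]0%R, +oo[ : set R) by [].
rewrite -ge0_integralZl_EFin//; last 2 first.
- move=> t _; rewrite lee_fin; apply: mulr_ge0; last exact: powR_ge0.
  by apply: mulr_ge0 => //; exact: powR_ge0.
- exact: mh.
rewrite -ge0_integralD//; last 4 first.
- by move=> t _; rewrite lee_fin mulr_ge0 // powR_ge0.
- exact: mg.
- move=> t _; rewrite -EFinM lee_fin mulr_ge0 ?expR_ge0//.
  by rewrite mulr_ge0// ?powR_ge0// mulr_ge0// powR_ge0.
- apply: measurable_funeM; exact: mh.
apply: ge0_le_integral => //.
- by move=> t _; rewrite lee_fin mulr_ge0 // powR_ge0.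
- exact: mg.
- apply: emeasurable_funD => //; first exact: mg.
  apply: measurable_funeM; exact: mh.
move=> t; rewrite /= in_itv /= andbT => t0.
rewrite -EFinM -EFinD lee_fin.
have g0 := powR_ge0 (sinh t) gamma.
have h0 := mulr_ge0 (powR_ge0 (cosh t) alpha) (powR_ge0 (sinh t) (p * gamma - alpha)).
have ew := expR_gt0 (- w).
rewrite !indicE.
have [ta|at_] := ltP t a.
- have -> : (t \in (`]0%R, a[%classic : set R)) = true.
    by apply: mem_set; rewrite /= in_itv /= t0 ta.
  rewrite mul1r.
  case: (t \in A); rewrite ?mul1r ?mul0r ?mulr0 ?addr0 //.
  by rewrite lerDl mulr_ge0// ltW.
- have -> : (t \in (`]0%R, a[%classic : set R)) = false.
    by apply: memNset; rewrite /= in_itv /= t0 /= ltNge at_.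
  rewrite mul0r.
  rewrite add0r; case: (t \in A); rewrite ?mul1r ?mul0r ?mulr0 //.
  try rewrite mul1r.
  have -> : sinh t `^ gamma = expR (- w) * (expR w * sinh t `^ gamma).
    by rewrite mulrA -expRD addNr expR0 mul1r.
  by rewrite ler_pM2l// hw.
Qed.
Lemma der_F (c x : R) : c != 0 ->
  is_derive x 1 (fun y : R => c^-1 * expR (c * y)) (expR (c * x)).
Proof.
move=> c0.
have h1 : is_derive x 1 (fun y : R => c * y) c.
  have := is_deriveZ c (is_derive_id x (1:R)).
  by move=> H; apply: is_derive_eq H _; rewrite /GRing.scale /= mulr1.
have h2 : is_derive x 1 (expR \o (fun y : R => c * y)) (expR (c * x) * c).
  exact: is_derive1_comp.
have h3 := is_deriveZ c^-1 h2.
apply: is_derive_eq h3 _.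
by rewrite /GRing.scale /= mulrCA mulVf// mulr1.
Qed.

Lemma der_E (c x : R) :
  is_derive x 1 (fun y : R => expR (c * y)) (expR (c * x) * c).
Proof.
have h1 : is_derive x 1 (fun y : R => c * y) c.
  have := is_deriveZ c (is_derive_id x (1:R)).
  by move=> H; apply: is_derive_eq H _; rewrite /GRing.scale /= mulr1.
exact: (@is_derive1_comp R expR (fun y : R => c * y)).
Qed.

Lemma int_expR (c a : R) : 0 < c -> 0 < a ->
  (\int[lebesgue_measure]_(x in `[0%R, a]) (expR (c * x))%:E = ((expR (c*a) - 1) / c)%:E)%E.
Proof.
move=> c0 a0.
have cn0 : c != 0 by rewrite gt_eqF.
have cF : continuous ((fun y : R => c^-1 * expR (c * y)) : R^o -> R^o).
  move=> y; apply: differentiable_continuous; apply/derivable1_diffP.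
  by have [] := @der_F c y cn0.
rewrite (@continuous_FTC2 R (fun x => expR (c * x)) (fun y => c^-1 * expR (c * y))) //.
- by rewrite mulr0 expR0 -EFinB -mulrBr mulrC.
- have cf : continuous ((fun x : R => expR (c * x)) : R^o -> R^o).
    move=> y; apply: differentiable_continuous; apply/derivable1_diffP.
    by have [] := @der_E c y.
  exact: (continuous_subspaceT cf).
- split.
  + by move=> y _; have [] := @der_F c y cn0.
  + by apply/cvg_at_right_filter; apply: cF.
  + by apply/cvg_at_left_filter; apply: cF.
- move=> y _; rewrite derive1E.
  by have [_ ->] := @der_F c y cn0.
Qed.

Lemma int_small (gamma a : R) : 0 < gamma -> 0 < a ->
  (\int[lebesgue_measure]_(t in `]0%R, +oo[)
      ((\1_`]0%R, a[ t : R) * sinh t `^ gamma)%:E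
   <= (a * sinh a `^ gamma)%:E)%E.
Proof.
move=> g0 a0.
have mI : measurable (`]0%R, +oo[ : set R) by [].
apply: (@le_trans _ _ (\int[lebesgue_measure]_(t in `]0%R, +oo[)
      ((sinh a `^ gamma)%:E * (\1_`]0%R, a[ t : R)%:E))%E).
  apply: ge0_le_integral => //.
  - by move=> t _; rewrite lee_fin mulr_ge0// powR_ge0.
  - exact: mg.
  - by apply: measurable_funeM; apply/measurable_EFinP.
  move=> t; rewrite /= in_itv /= andbT => t0.
  rewrite -EFinM lee_fin !indicE.
  case: (boolP (t \in _)) => ht; rewrite ?mul0r ?mulr0 ?mul1r ?mulr1 //.
  move: ht; rewrite inE /= in_itv /= => /andP[_ ta].
  apply: ge0_ler_powR; first exact: ltW.
  - by rewrite nnegrE; apply: ltW; exact: sinh_gt0.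
  - by rewrite nnegrE; apply: ltW; exact: sinh_gt0.
  - by apply: sinh_le; exact: ltW.
rewrite ge0_integralZl_EFin//; last 2 first.
- apply/measurable_EFinP; exact: measurable_funTS.
- exact: powR_ge0.
rewrite integral_indic//.
rewrite setIidl; last by move=> t /=; rewrite !in_itv /= andbT => /andP[].
have -> : (a * sinh a `^ gamma)%:E =
  ((sinh a `^ gamma)%:E * lebesgue_measure (`]0%R, a[ : set R))%E.
  by rewrite lebesgue_measure_itv /= lte_fin a0 sube0 -EFinM mulrC.
exact: lexx.
Qed.

Lemma int_large (gamma a : R) : 0 < gamma -> 0 < a ->
  (\int[lebesgue_measure]_(t in `]0%R, +oo[)
      ((\1_`]0%R, a[ t : R) * sinh t `^ gamma)%:E
   <= (expR (gamma * a) / gamma)%:E)%E.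
Proof.
move=> g0 a0.
have mI : measurable (`]0%R, +oo[ : set R) by [].
have me : measurable_fun setT (fun t : R => expR (gamma * t)).
  apply: (measurableT_comp (@measurable_expR R)).
  exact: (@measurable_funM _ _ _ _ (cst gamma) id).
apply: (@le_trans _ _ (\int[lebesgue_measure]_(t in `]0%R, +oo[)
      ((\1_`]0%R, a[ t : R) * expR (gamma * t))%:E)%E).
  apply: ge0_le_integral => //.
  - by move=> t _; rewrite lee_fin mulr_ge0// powR_ge0.
  - exact: mg.
  - apply/measurable_EFinP; apply: measurable_funTS.
    exact: (@measurable_funM _ _ _ _ (\1_`]0%R, a[) (fun t => expR (gamma * t))).
  move=> t; rewrite /= in_itv /= andbT => t0.
  rewrite lee_fin; apply: ler_wpM2l => //.
  have st := @sinh_gt0 t t0.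
  rewrite /powR gt_eqF// ler_expR ler_pM2l//.
  rewrite -{2}(expRK t); apply: ln_le => //; exact: sinh_le_expR.
have -> : (\int[lebesgue_measure]_(t in `]0%R, +oo[)
      ((\1_`]0%R, a[ t : R) * expR (gamma * t))%:E =
   \int[lebesgue_measure]_(t in `]0%R, +oo[)
      ((fun t => (expR (gamma * t))%:E) \_ `]0%R, a[) t)%E.
  by apply: eq_integral => t _; rewrite /patch indicE; case: ifPn; rewrite ?mul1r ?mul0r.
rewrite -integral_mkcondr.
apply: (@le_trans _ _ (\int[lebesgue_measure]_(t in `[0%R, a]) (expR (gamma * t))%:E)%E).
  apply: ge0_subset_integral => //.
  - exact: measurableI.
  - by apply/measurable_EFinP; apply: measurable_funTS.
  - move=> t [] /=; rewrite !in_itv /= andbT => t0 /andP[_ ta].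
    by rewrite (ltW t0) (ltW ta).
rewrite int_expR// lee_fin ler_wpM2r// ?invr_ge0 ?(ltW g0)//.
by rewrite lerBlDr lerDl.
Qed.

Lemma ln_div (x c : R) : 0 < x -> 0 < c -> ln (x / c) = ln x - ln c.
Proof. by move=> x0 c0; rewrite lnM ?posrE ?invr_gt0// lnV ?posrE. Qed.

Lemma ln4 : ln (4 : R) = 2 * ln 2.
Proof. by rewrite (_ : 4 = 2 * 2 :> R) ?lnM ?posrE// ?mulr2n ?mulrDl ?mul1r //; lra. Qed.

Lemma nu_facts (alpha p : R) : 1 <= p -> 1 - alpha <= p ->
  [/\ 0 <= Num.max 0 (- alpha), - alpha <= Num.max 0 (- alpha) &
      Num.max 0 (- alpha) <= p - 1].
Proof.
move=> p1 pa; split; first by rewrite le_max lexx.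
- by rewrite le_max lexx orbT.
- by rewrite ge_max; apply/andP; split; lra.
Qed.

Lemma regime_small (gamma alpha p z : R) :
  0 < gamma -> 1 <= p -> 1 - alpha <= p -> z <= 0 ->
  exists a w, [/\ 0 < a,
    (forall t, a <= t -> expR w * sinh t `^ gamma <=
                         cosh t `^ alpha * sinh t `^ (p * gamma - alpha)),
    (\int[lebesgue_measure]_(t in `]0%R, +oo[)
        ((\1_`]0%R, a[ t : R) * sinh t `^ gamma)%:E <= (2^-1 * expR z)%:E)%E &
    p * z - w <= 2 * (p - 1) * gamma * ln 2 + 3 * Num.max 0 (- alpha) * ln 2 + z].
Proof.
move=> g0 p1 pa z0.
have [n0 n1 n2] := @nu_facts alpha p p1 pa.
set nu := Num.max 0 (- alpha) in n0 n1 n2 *.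
set lb := z / (gamma + 1).
have g1 : 0 < gamma + 1 by lra.
have lb0 : lb <= 0 by rewrite /lb pmulr_lle0 ?invr_gt0//.
have hz : z = (gamma + 1) * lb by rewrite /lb mulrCA mulfV ?mulr1// gt_eqF.
set b := expR lb.
have b0 : 0 < b := expR_gt0 lb.
have b1 : b <= 1 by rewrite /b -expR0 ler_expR.
have lnb : ln b = lb by rewrite /b expRK.
set a := b / 2.
have a0 : 0 < a by rewrite /a divr_gt0.
have a12 : 0 <= a <= 2^-1 by apply/andP; split; rewrite /a; lra.
have [s1 s2 s3] := @sinh_small a a12.
have sa := @sinh_gt0 a a0.
have l2 : 0 < ln (2 : R) by apply: ln_gt0; lra.
have Ls : lb - 2 * ln 2 <= ln (sinh a).
  rewrite -lnb -ln4 -ln_div//; apply: ln_le; first by apply: divr_gt0 => //.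
  by rewrite /a in s2; lra.
have Lc : ln (cosh a) <= ln 2 by apply: ln_le => //; exact: cosh_gt0.
exists a, ((p - 1) * gamma * (lb - 2 * ln 2) + nu * (lb - 3 * ln 2)); split => //.
- move=> t at_; apply: (@pointwise gamma alpha p _ a t) => //.
  have q0 : 0 <= (p - 1) * gamma by apply: mulr_ge0; lra.
  rewrite -/nu; nra.
- apply: le_trans; first exact: int_small.
  rewrite lee_fin.
  have -> : expR z = b * b `^ gamma.
    by rewrite /powR gt_eqF// lnb /b -expRD hz; congr expR; lra.
  rewrite mulrA [2^-1 * b]mulrC -/a ler_wpM2l//; first exact: ltW.
  have := ltW sa; have := ltW b0; rewrite /a in s1 * => sa' b0'.
  apply: ge0_ler_powR; rewrite ?nnegrE; lra.
- have q0 : 0 <= (p - 1) * gamma by apply: mulr_ge0; lra.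
  rewrite hz; nra.
Qed.

Lemma regime_large (gamma alpha p z : R) :
  0 < gamma -> 1 <= p -> 1 - alpha <= p -> 0 <= z ->
  exists a w, [/\ 0 < a,
    (forall t, a <= t -> expR w * sinh t `^ gamma <=
                         cosh t `^ alpha * sinh t `^ (p * gamma - alpha)),
    (\int[lebesgue_measure]_(t in `]0%R, +oo[)
        ((\1_`]0%R, a[ t : R) * sinh t `^ gamma)%:E
       <= (expR gamma / gamma * expR z)%:E)%E &
    p * z - w <= 2 * (p - 1) * gamma * ln 2 + 3 * Num.max 0 (- alpha) * ln 2 + z].
Proof.
move=> g0 p1 pa z0.
have [n0 n1 n2] := @nu_facts alpha p p1 pa.
set nu := Num.max 0 (- alpha) in n0 n1 n2 *.
set a := 1 + z / gamma.
have a1 : 1 <= a by rewrite /a lerDl divr_ge0// ltW.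
have a0 : 0 < a by lra.
have [s1 s2] := @sinh_large a a1.
have sa := @sinh_gt0 a a0.
have l2 : 0 < ln (2 : R) by apply: ln_gt0; lra.
have Ls : a - 2 * ln 2 <= ln (sinh a).
  rewrite -ln4 -{1}(expRK a) -ln_div ?expR_gt0//; apply: ln_le => //.
  by apply: divr_gt0 => //; exact: expR_gt0.
have Lc : ln (cosh a) <= ln 2 + ln (sinh a).
  rewrite -lnM ?posrE//; apply: ln_le => //; exact: cosh_gt0.
have q0 : 0 <= (p - 1) * gamma by apply: mulr_ge0; lra.
exists a, ((p - 1) * gamma * (a - 2 * ln 2) - nu * ln 2); split => //.
- move=> t at_; apply: (@pointwise gamma alpha p _ a t) => //.
  rewrite -/nu; nra.
- apply: le_trans; first exact: int_large.
  rewrite lee_fin mulrAC -expRD /a mulrDr mulr1 mulrCA mulfV ?gt_eqF// mulr1.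
  by [].
- have ha : gamma * a = gamma + z by rewrite /a mulrDr mulr1 mulrCA mulfV ?gt_eqF// mulr1.
  nra.
Qed.

Lemma combine (gamma alpha p w a G z k2 : R) (A : set R) :
  measurable A -> 0 < a ->
  (forall t, a <= t -> expR w * sinh t `^ gamma <=
                       cosh t `^ alpha * sinh t `^ (p * gamma - alpha)) ->
  (\int[lebesgue_measure]_(t in `]0%R, +oo[)
        ((\1_`]0%R, a[ t : R) * sinh t `^ gamma)%:E <= (G * expR z)%:E)%E ->
  p * z - w <= k2 + z ->
  (\int[lebesgue_measure]_(t in `]0%R, +oo[)
          ((\1_A t : R) * cosh t `^ alpha * sinh t `^ (p * gamma - alpha))%:E
     = (expR (p * z))%:E)%E ->
  (\int[lebesgue_measure]_(t in `]0%R, +oo[) ((\1_A t : R) * sinh t `^ gamma)%:E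
    <= ((G + expR k2) * expR z)%:E)%E.
Proof.
move=> mA a0 hw hG hk hY.
apply: le_trans; first exact: (@key gamma alpha p w a A).
rewrite hY -EFinM mulrDl EFinD leeD// lee_fin -!expRD ler_expR.
lra.
Qed.

End S.

Theorem lemma5p3 (R : realType) (gamma alpha p : R) :
  0 < gamma -> Num.max 1 (1 - alpha) <= p ->
  exists C : R, 0 < C /\
    forall A : set R, measurable A -> A `<=` `]0%R, +oo[ ->
      (lebesgue_measure A < +oo)%E ->
      (\int[lebesgue_measure]_(t in `]0%R, +oo[)
          ((\1_A t : R) * sinh t `^ gamma)%:E
       <= C%:E * poweR (\int[lebesgue_measure]_(t in `]0%R, +oo[)
          ((\1_A t : R) * cosh t `^ alpha * sinh t `^ (p * gamma - alpha))%:E)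
          p^-1)%E.
Proof.
move=> g0; rewrite ge_max => /andP[p1 pa].
set k2 := 2 * (p - 1) * gamma * ln 2 + 3 * Num.max 0 (- alpha) * ln 2.
set K1 := Num.max 2^-1 (expR gamma / gamma).
have K1h : 2^-1 <= K1 /\ expR gamma / gamma <= K1.
  by rewrite /K1 !le_max !lexx ?orbT.
exists (K1 + expR k2); split.
  by apply: addr_gt0; [apply: lt_le_trans K1h.1; lra|exact: expR_gt0].
move=> A mA AI Afin.
have H : forall z,
  (\int[lebesgue_measure]_(t in `]0%R, +oo[)
          ((\1_A t : R) * cosh t `^ alpha * sinh t `^ (p * gamma - alpha))%:E
     = (expR (p * z))%:E)%E ->
  (\int[lebesgue_measure]_(t in `]0%R, +oo[) ((\1_A t : R) * sinh t `^ gamma)%:E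
    <= ((K1 + expR k2) * expR z)%:E)%E.
  move=> z hY; have [hz|hz] := leP z 0.
  - have [a [w [a0 hw hG hk]]] := @regime_small R gamma alpha p _ g0 p1 pa hz.
    apply: le_trans; first exact: (@combine _ _ _ _ _ _ _ _ _ _ mA a0 hw hG hk hY).
    by rewrite lee_fin ler_wpM2r ?expR_ge0// lerD2r K1h.1.
  - have [a [w [a0 hw hG hk]]] := @regime_large R gamma alpha p _ g0 p1 pa (ltW hz).
    apply: le_trans; first exact: (@combine _ _ _ _ _ _ _ _ _ _ mA a0 hw hG hk hY).
    by rewrite lee_fin ler_wpM2r ?expR_ge0// lerD2r K1h.2.
have H0 :
  (\int[lebesgue_measure]_(t in `]0%R, +oo[)
          ((\1_A t : R) * cosh t `^ alpha * sinh t `^ (p * gamma - alpha))%:E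
     = 0)%E ->
  (\int[lebesgue_measure]_(t in `]0%R, +oo[) ((\1_A t : R) * sinh t `^ gamma)%:E
    <= 0)%E.
  move=> hY; apply/lee_addgt0Pr => e e0; rewrite add0e.
  have m0 : 0 < Num.min e 1 by rewrite lt_min e0 ltr01.
  have hz : ln (Num.min e 1) <= 0.
    by rewrite -ln1; apply: ln_le => //; rewrite ge_min lexx orbT.
  have [a [w [a0 hw hG hk]]] := @regime_small R gamma alpha p _ g0 p1 pa hz.
  apply: le_trans; first exact: (@key _ _ _ _ _ _ _ mA a0 hw).
  rewrite hY mule0 adde0; apply: le_trans; first exact: hG.
  rewrite lnK ?posrE// lee_fin.
  have : Num.min e 1 <= e by rewrite ge_min lexx.
  lra.
have Y0 : (0 <= \int[lebesgue_measure]_(t in `]0%R, +oo[)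
          ((\1_A t : R) * cosh t `^ alpha * sinh t `^ (p * gamma - alpha))%:E)%E.
  apply: integral_ge0 => t _; rewrite lee_fin.
  by apply: mulr_ge0; [apply: mulr_ge0|]; rewrite ?powR_ge0.
move: H H0 Y0.
case: (\int[lebesgue_measure]_(t in `]0%R, +oo[)
          ((\1_A t : R) * cosh t `^ alpha * sinh t `^ (p * gamma - alpha))%:E)%E
  => [y| |] H H0 Y0 //.
- rewrite lee_fin le_eqVlt in Y0; case/predU1P: Y0 => [y0|y0].
    rewrite -y0 in H0 *; apply: le_trans; first exact: H0.
    apply: mule_ge0; last exact: poweR_ge0.
    rewrite lee_fin; apply: addr_ge0; last exact: expR_ge0.
    by apply: le_trans K1h.1; lra.
  have pn0 : p != 0 by rewrite gt_eqF//; lra.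
  apply: le_trans; first apply: (H (p^-1 * ln y)).
    by rewrite mulrA mulfV// mul1r lnK// posrE.
  by rewrite poweR_EFin -EFinM /powR gt_eqF.
- rewrite poweRyr ?invr_eq0 ?gt_eqF//; last lra.
  rewrite gt0_muley ?leey// lte_fin.
  by apply: addr_gt0; [apply: lt_le_trans K1h.1; lra|exact: expR_gt0].
Qed.
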